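(* Let $v\ge2$, $n\ge1$, $\epsilon>0$. Let $(Q,\hat P_n)$ and $(Q',\hat P_n')$ be block design schemes with parameters $(v,b,r,k,\lambda,\epsilon)$ and $(v,b',r',k',\lambda',\epsilon)$, respectively. Then the two schemes are marginally equivalent if and only if $k=k'$.
   Context: $\mathcal{X}=\{1,\dots,v\}$; $\Delta_v$ is the set of probability vectors on $\mathcal{X}$. For an incidence structure $(\mathcal{X},\mathcal{Y},\mathcal{I})$ ($\mathcal{I}\subset\mathcal{X}\times\mathcal{Y}$) write $\mathcal{I}_x=\{y:(x,y)\in\mathcal{I}\}$, $\mathcal{I}^y=\{x:(x,y)\in\mathcal{I}\}$. For integers $v>k>0$, $b>r>\lambda\ge0$, a $(v,b,r,k,\lambda)$-block design is an incidence structure with $|\mathcal{X}|=v$, $|\mathcal{Y}|=b$, $|\mathcal{I}_x|=r$ for all $x$, $|\mathcal{I}^y|=k$ for all $y$, $|\mathcal{I}_x\cap\mathcal{I}_{x'}|=\lambda$ for all $x\neq x'$. A block design scheme with parameters $(v,b,r,k,\lambda,\epsilon)$ consists of a $(v,b,r,k,\lambda)$-block design, the mechanism $Q(y|x)=\alpha e^\epsilon$ if $(x,y)\in\mathcal{I}$ and $\alpha$ otherwise, with $\alpha=1/(re^\epsilon+b-r)$, and the estimator $\hat P_{n,x}(Y_1,\dots,Y_n)=\frac{1}{(r-\lambda)(e^\epsilon-1)}\left(\frac{N_x}{n\alpha}-(\lambda e^\epsilon+r-\lambda)\right)$, $N_x=\sum_{i=1}^n\mathbb{1}(Y_i\in\mathcal{I}_x)$.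 Two schemes $(Q,\hat P_n)$, $(Q',\hat P_n')$ (mechanisms with inputs in $\mathcal{X}$) are marginally equivalent if, whenever $X_1,\dots,X_n$ are i.i.d. $\sim P$ and $Y_i\sim Q(\cdot|X_i)$, $Y_i'\sim Q'(\cdot|X_i)$, one has $\hat P_{n,x}(Y_1,\dots,Y_n)\overset{d}{=}\hat P'_{n,x}(Y_1',\dots,Y_n')$ for every $x\in\mathcal{X}$ and every $P\in\Delta_v$. *)

(* Defs.v *)
From mathcomp Require Import all_boot all_order all_algebra.
From mathcomp Require Import reals.
From mathcomp.analysis Require Import sequences exp.
Set Implicit Arguments. Unset Strict Implicit. Unset Printing Implicit Defensive.
Import Order.TTheory GRing.Theory Num.Theory.
Local Open Scope ring_scope.

(* X = 'I_v (element i stands for i+1), Y = 'I_b.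
   An incidence structure is a boolean relation inc : 'I_v -> 'I_b -> bool. *)

Definition is_block_design (v b r k lam : nat) (inc : 'I_v -> 'I_b -> bool) : Prop :=
  [/\ (0 < k < v)%N, (lam < r < b)%N,
      (forall x : 'I_v, #|[set y | inc x y]| = r),
      (forall y : 'I_b, #|[set x | inc x y]| = k) &
      (forall x x' : 'I_v, x != x' -> #|[set y | inc x y && inc x' y]| = lam)].

Definition is_prob_vec (R : realType) (v : nat) (P : 'I_v -> R) : Prop :=
  (forall x, 0 <= P x) /\ \sum_(x < v) P x = 1.

Section BlockScheme.
Variables (R : realType) (v b r lam n : nat) (eps : R) (inc : 'I_v -> 'I_b -> bool).

Definition bd_alpha : R := 1 / (r%:R * expR eps + b%:R - r%:R).

Definition bd_Q (x : 'I_v) (y : 'I_b) : R :=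
  if inc x y then bd_alpha * expR eps else bd_alpha.

Definition bd_N (x : 'I_v) (ys : {ffun 'I_n -> 'I_b}) : nat :=
  #|[set i : 'I_n | inc x (ys i)]|.

Definition bd_est (x : 'I_v) (ys : {ffun 'I_n -> 'I_b}) : R :=
  1 / ((r%:R - lam%:R) * (expR eps - 1)) *
  ((bd_N x ys)%:R / (n%:R * bd_alpha) - (lam%:R * expR eps + r%:R - lam%:R)).

End BlockScheme.

(* Law of the estimator: Pr[ est x (Y_1..Y_n) = t ] where X_1..X_n i.i.d. ~ P
   and, independently across i, Y_i ~ Q(.|X_i). *)
Definition est_law (R : realType) (v n : nat) (Y : finType)
    (Q : 'I_v -> Y -> R) (est : 'I_v -> {ffun 'I_n -> Y} -> R)
    (P : 'I_v -> R) (x : 'I_v) (t : R) : R :=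
  \sum_(xs : {ffun 'I_n -> 'I_v})
    \sum_(ys : {ffun 'I_n -> Y} | est x ys == t)
      \prod_(i < n) (P (xs i) * Q (xs i) (ys i)).

(* marginal equivalence: equality in distribution (of these finitely supported
   real random variables, i.e. equality of their probability mass functions)
   for every x and every P in Delta_v *)
Definition marginally_equivalent (R : realType) (v n : nat) (Y Y' : finType)
    (Q : 'I_v -> Y -> R) (est : 'I_v -> {ffun 'I_n -> Y} -> R)
    (Q' : 'I_v -> Y' -> R) (est' : 'I_v -> {ffun 'I_n -> Y'} -> R) : Prop :=
  forall P : 'I_v -> R, is_prob_vec P ->
  forall (x : 'I_v) (t : R), est_law Q est P x t = est_law Q' est' P x t.

(* Main.v *)
Require Import Defs.
From mathcomp Require Import all_boot all_order all_algebra.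
From mathcomp Require Import reals.
From mathcomp.analysis Require Import sequences exp.
From mathcomp Require Import ring lra.
Import Order.TTheory GRing.Theory Num.Theory.
Local Open Scope ring_scope.
Set Implicit Arguments. Unset Strict Implicit. Unset Printing Implicit Defensive.

Definition Ak (R : realFieldType) (E V K : R) := K * ((K-1) * (E-1) + V - 1) / ((V-1) * (K * (E-1)+V)).
Definition Bk (R : realFieldType) (E V K : R) := (E-1) * K * (V-K) / ((V-1) * (K * (E-1)+V)).

Ltac sidec := repeat (apply/andP; split); first [apply: lt0r_neq0; nra | apply: ltr0_neq0; nra | idtac].

Lemma alg (R : realFieldType) (E V K r b l N J : R) : 1 < E -> 0 < K -> K < V -> 1 < V -> 0 < r ->
  b * K = V * r -> r + (V-1) * l = r * K -> 0 < N ->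
  [/\ 1/(r * E + b - r)  * (r + (E-1) * l) = Ak E V K,
      1/(r * E + b - r)  * (E-1) * (r-l) = Bk E V K &
      1/((r-l) * (E-1))  *  (J/(N * (1/(r * E + b - r))) - (l * E+r-l)) = (J/N - Ak E V K)/Bk E V K].
Proof.
move=> hE hK hKV hV hr h1 h2 hN.
have hb : b = V * r/K by rewrite -h1; field; lra.
have hl : l = r * (K-1)/(V-1).
  have -> : r * (K-1) = l * (V-1) by rewrite mulrBr mulr1 -h2; ring.
  field; lra.
have hKE : 0 < K * (E-1) by apply: mulr_gt0; lra.
have hrKE : 0 < r * (K * (E-1) + V) by apply: mulr_gt0; lra.
have hVK : 0 < (E-1) * (V - K) by apply: mulr_gt0; lra.
have hKVK : 0 < K * ((E-1) * (V - K)) by apply: mulr_gt0; lra.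
have hrV : 0 < r * (V - K) by apply: mulr_gt0; lra.
rewrite /Ak /Bk hb hl; split.
- field; sidec.
- field; sidec.
- field; sidec.
Qed.

Lemma Bk_gt0 (R : realFieldType) (E V K : R) : 1 < E -> 0 < K -> K < V -> 1 < V -> 0 < Bk E V K.
Proof.
move=> hE hK hKV hV; rewrite /Bk.
apply: divr_gt0; first by apply: mulr_gt0; [apply: mulr_gt0|]; lra.
apply: mulr_gt0; first lra.
have : 0 < K * (E - 1) by apply: mulr_gt0; lra.
lra.
Qed.

Lemma AB_sum (R : realFieldType) (E V K : R) : 1 < E -> 0 < K -> K < V -> 1 < V ->
  Ak E V K + Bk E V K = K * E / (K * (E-1) + V).
Proof.
move=> hE hK hKV hV; rewrite /Ak /Bk.
have : 0 < K * (E - 1) by apply: mulr_gt0; lra.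
move=> h; field; apply/andP; split; apply: lt0r_neq0; lra.
Qed.

Lemma p_gt0 (R : realFieldType) (E V K : R) : 1 < E -> 0 < K -> K < V -> 1 < V ->
  0 < K * E / (K * (E-1) + V).
Proof.
move=> hE hK hKV hV.
have : 0 < K * (E - 1) by apply: mulr_gt0; lra.
move=> h; apply: divr_gt0; [apply: mulr_gt0|]; lra.
Qed.

Lemma p_inj (R : realFieldType) (E V K K' : R) : 1 < E -> 0 < K -> 0 < K' -> 1 < V ->
  K * E / (K * (E-1) + V) = K' * E / (K' * (E-1) + V) -> K = K'.
Proof.
move=> hE hK hK' hV.
have h1 : 0 < K * (E - 1) by apply: mulr_gt0; lra.
have h2 : 0 < K' * (E - 1) by apply: mulr_gt0; lra.
move/eqP; rewrite eqr_div; try (apply: lt0r_neq0; lra).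
move/eqP => h.
have : K * E * V = K' * E * V.
  apply/eqP; rewrite -subr_eq0.
  have -> : K * E * V - K' * E * V = K * E * (K' * (E - 1) + V) - K' * E * (K * (E - 1) + V) by ring.
  by rewrite h subrr.
move/(mulIf _)/(mulIf _) => -> //; apply: lt0r_neq0; lra.
Qed.

Section Gen.
Variable R : realType.

Lemma law_w (v n : nat) (Y : finType) (Q : 'I_v -> Y -> R) est P x t :
  est_law Q est P x t = \sum_(ys : {ffun 'I_n -> Y} | est x ys == t)
     \prod_(i < n) (\sum_(x' < v) P x' * Q x' (ys i)).
Proof.
rewrite /est_law exchange_big /=; apply: eq_bigr => ys _.
by rewrite bigA_distr_bigA.
Qed.

Lemma ind_sum (Y : finType) (A : pred Y) :
  \sum_y ((A y)%:R : R) = #|[set y | A y]|%:R.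
Proof.
rewrite -sumr_const (bigID A) /= [X in _ + X]big1 ?addr0; last by move=> y /negbTE ->.
by apply: eq_big => [y|y ->]; rewrite ?inE.
Qed.

Lemma sum_count (Y : finType) n (A : pred Y) (w : Y -> R) j :
  \sum_(ys : {ffun 'I_n -> Y} | #|[set i | A (ys i)]| == j) \prod_i w (ys i)
  = 'C(n, j)%:R * (\sum_(y | A y) w y) ^+ j * (\sum_(y | ~~ A y) w y) ^+ (n - j).
Proof.
rewrite (partition_big (fun ys : {ffun 'I_n -> Y} => [set i | A (ys i)])
          (fun S : {set 'I_n} => #|S| == j)) /=; last by [].
rewrite (eq_bigr (fun S => (\sum_(y | A y) w y) ^+ j * (\sum_(y | ~~ A y) w y) ^+ (n - j))).
  rewrite sumr_const -[X in X = _]mulr_natl mulrA.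
  have -> : #|(fun S : {set 'I_n} => #|S| == j)| = #|[set S : {set 'I_n} | #|S| == j]|.
    by apply: eq_card => S; rewrite inE.
  by rewrite card_draws card_ord [_%:R * _]mulrC.
move=> S /eqP hS.
transitivity (\sum_(f in family (fun i y => A y == (i \in S))) \prod_i w (f i)).
  apply: eq_bigl => f; apply/andP/familyP.
    by case=> _ /eqP <- i; rewrite inE; exact: eqxx.
  move=> hf; have eS : [set i | A (f i)] = S.
    apply/setP => i; rewrite inE; apply/eqP; by have := hf i; rewrite unfold_in.
  by rewrite eS hS eqxx.
rewrite -(bigA_distr_big_dep (fun i y => A y == (i \in S)) (fun _ y => w y)).
rewrite (bigID (fun i => i \in S)) /=.
rewrite (eq_bigr (fun _ => \sum_(y | A y) w y)); last first.
  by move=> i ->; apply: eq_bigl => y; rewrite eqb_id.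
rewrite [X in _ * X](eq_bigr (fun _ => \sum_(y | ~~ A y) w y)); last first.
  by move=> i /negbTE ->; apply: eq_bigl => y; rewrite eqbF_neg.
rewrite !prodr_const; congr (_ ^+ _ * _ ^+ _); first by rewrite -hS.
have h := cardC S; rewrite card_ord hS in h.
have -> : #|(fun i => i \notin S)| = #|[predC S]| by apply: eq_card.
move: h; generalize #|[predC S]| => c h.
by rewrite -[X in _ = (X - _)%N]h addKn.
Qed.

End Gen.

Lemma sum_const_ord (R : realType) v (c : R) : \sum_(x < v) c = v%:R * c.
Proof. by rewrite sumr_const card_ord mulr_natl. Qed.

Lemma ind_and (R : realType) (a b : bool) : ((a && b)%:R : R) = a%:R * b%:R.
Proof. by case: a; case: b; rewrite ?mulr1 ?mulr0. Qed.

Lemma bd_id1 (R : realType) v b r k lam (inc : 'I_v -> 'I_b -> bool) :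
  @is_block_design v b r k lam inc -> (b%:R * k%:R = v%:R * r%:R :> R).
Proof.
case=> _ _ hr hk _.
transitivity (\sum_(y : 'I_b) \sum_(x : 'I_v) ((inc x y)%:R : R)).
  rewrite -sum_const_ord; apply: eq_bigr => y _; by rewrite ind_sum hk.
rewrite exchange_big /= -sum_const_ord; apply: eq_bigr => x _; by rewrite ind_sum hr.
Qed.

Lemma bd_id2 (R : realType) v b r k lam (inc : 'I_v -> 'I_b -> bool) :
  (2 <= v)%N -> @is_block_design v b r k lam inc ->
  (r%:R + (v%:R - 1) * lam%:R = r%:R * k%:R :> R).
Proof.
move=> hv [_ _ hr hk hl].
have hv0 : (0 < v)%N by apply: leq_trans hv.
pose x0 : 'I_v := Ordinal hv0.
transitivity (\sum_(x : 'I_v) \sum_(y : 'I_b) ((inc x0 y)%:R * (inc x y)%:R : R)).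
  rewrite [in RHS](bigD1 x0) //=.
  rewrite [X in _ = _ + X](eq_bigr (fun _ => lam%:R)); last first.
    move=> x hx; under eq_bigr do rewrite -ind_and.
    by rewrite ind_sum hl // eq_sym.
  rewrite sumr_const.
  under eq_bigr do rewrite -ind_and andbb.
  rewrite ind_sum hr; congr (_ + _).
  have -> : #|(fun x => x != x0)| = #|predC1 x0| by apply: eq_card.
  rewrite cardC1 card_ord -[RHS]mulr_natl.
  have -> : (v.-1)%:R = v%:R - 1 :> R by rewrite -subn1 natrB.
  by rewrite mulrC.
rewrite exchange_big /= -(hr x0) -ind_sum mulr_suml; apply: eq_bigr => y _.
rewrite -mulr_sumr ind_sum hk.
by case: (inc x0 y); rewrite ?mul1r ?mul0r.
Qed.

Lemma bdQ_eq (R : realType) v b r eps (inc : 'I_v -> 'I_b -> bool) x y :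
  @bd_Q R v b r eps inc x y = @bd_alpha R b r eps + @bd_alpha R b r eps * (expR eps - 1) * (inc x y)%:R.
Proof. by rewrite /bd_Q; case: (inc x y); rewrite ?mulr1 ?mulr0 ?addr0 //; ring. Qed.

Lemma sumP_ind (R : realType) v (P : 'I_v -> R) x : \sum_(x' < v) P x' * (x' == x)%:R = P x.
Proof.
rewrite (bigD1 x) //= eqxx mulr1 big1 ?addr0 // => x' /negbTE ->; by rewrite mulr0.
Qed.

Lemma sumQ_in (R : realType) v b r k lam eps (inc : 'I_v -> 'I_b -> bool) x x' :
  @is_block_design v b r k lam inc ->
  \sum_(y | inc x y) @bd_Q R v b r eps inc x' y =
  @bd_alpha R b r eps * r%:R + @bd_alpha R b r eps * (expR eps - 1) *
     ((x' == x)%:R * (r%:R - lam%:R) + lam%:R).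
Proof.
move=> [_ _ hr _ hl].
rewrite big_mkcond /=.
transitivity (\sum_y (@bd_alpha R b r eps * (inc x y)%:R +
   @bd_alpha R b r eps * (expR eps - 1) * (inc x y && inc x' y)%:R)).
  apply: eq_bigr => y _; rewrite bdQ_eq ind_and.
  by case: (inc x y); rewrite ?mul1r ?mul0r ?mulr1 ?mulr0 ?addr0.
rewrite big_split /= -!mulr_sumr !ind_sum hr; congr (_ + _ * _).
case: (eqVneq x' x) => [->|ne].
  have -> : [set y | inc x y && inc x y] = [set y | inc x y].
    by apply/setP => y; rewrite !inE andbb.
  by rewrite hr mul1r subrK.
by rewrite hl 1?eq_sym // mul0r add0r.
Qed.

Lemma sumQ_all (R : realType) v b r k lam eps (inc : 'I_v -> 'I_b -> bool) x' :
  0 < eps -> @is_block_design v b r k lam inc ->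
  \sum_y @bd_Q R v b r eps inc x' y = 1.
Proof.
move=> he [_ /andP[_ hrb] hr _ _].
under eq_bigr do rewrite bdQ_eq.
rewrite big_split /= -[X in _ + X]mulr_sumr ind_sum hr sumr_const card_ord /bd_alpha.
have hE : 1 < expR eps by rewrite expR_gt1.
have hb : (r%:R < b%:R :> R) by rewrite ltr_nat.
have hr0 : (0 <= r%:R :> R) by [].
have hD : 0 < r%:R * expR eps + b%:R - r%:R :> R.
  have : 0 <= r%:R * (expR eps - 1) :> R by apply: mulr_ge0; lra.
  lra.
rewrite -mulr_natr; field; apply: lt0r_neq0; lra.
Qed.

Lemma law_bd (R : realType) v b r k lam n eps (inc : 'I_v -> 'I_b -> bool) P x t :
  (2 <= v)%N -> (1 <= n)%N -> 0 < eps ->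
  @is_block_design v b r k lam inc -> is_prob_vec P ->
  est_law (@bd_Q R v b r eps inc) (@bd_est R v b r lam n eps inc) P x t =
  \sum_(j < n.+1 | (j%:R / n%:R - Ak (expR eps) v%:R k%:R) / Bk (expR eps) v%:R k%:R == t)
    'C(n, j)%:R * (Ak (expR eps) v%:R k%:R + P x * Bk (expR eps) v%:R k%:R) ^+ j *
    (1 - (Ak (expR eps) v%:R k%:R + P x * Bk (expR eps) v%:R k%:R)) ^+ (n - j).
Proof.
move=> hv hn he hbd [hP0 hP1].
have h1 := bd_id1 R hbd.
have h2 := bd_id2 R hv hbd.
have [/andP[hk0 hkv] /andP[hlr hrb] _ _ _] := hbd.
have hE : 1 < expR eps by rewrite expR_gt1.
have hK : 0 < k%:R :> R by rewrite ltr0n.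
have hKV : k%:R < v%:R :> R by rewrite ltr_nat.
have hV : 1 < v%:R :> R by rewrite ltr1n.
have hr : 0 < r%:R :> R by rewrite ltr0n; apply: leq_ltn_trans hlr.
have hN : 0 < n%:R :> R by rewrite ltr0n.
have hA := fun J => @alg R (expR eps) v%:R k%:R r%:R b%:R lam%:R n%:R J hE hK hKV hV hr h1 h2 hN.
set A := Ak _ _ _ in hA *; set B := Bk _ _ _ in hA *.
have [eA eB _] := hA 0.
have hG : forall J, 1 / ((r%:R - lam%:R) * (expR eps - 1)) *
      (J / (n%:R * @bd_alpha R b r eps) - (lam%:R * expR eps + r%:R - lam%:R)) = (J / n%:R - A) / B.
  by move=> J; have [_ _ ->] := hA J.
have hNn : forall ys, (@bd_N v b n inc x ys <= n)%N.
  by move=> ys; rewrite /bd_N; apply: leq_trans (max_card _) _; rewrite card_ord.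
rewrite law_w.
rewrite (partition_big (fun ys => (inord (@bd_N v b n inc x ys) : 'I_n.+1))
          (fun j : 'I_n.+1 => (j%:R / n%:R - A) / B == t)) /=; last first.
  by move=> ys /eqP <-; rewrite /bd_est hG inordK // ltnS.
apply: eq_bigr => j /eqP hj.
transitivity (\sum_(ys : {ffun 'I_n -> 'I_b} | #|[set i | inc x (ys i)]| == j)
   \prod_(i < n) (\sum_(x' < v) P x' * @bd_Q R v b r eps inc x' (ys i))).
  apply: eq_bigl => ys; rewrite /bd_est hG -hj.
  case: (eqVneq (@bd_N v b n inc x ys) j) => [e|ne].
    rewrite /bd_N in e; rewrite /bd_N e eqxx /=.
    by apply/eqP; apply: val_inj; rewrite /= inordK // ltnS; rewrite -e hNn.
  rewrite andbC.
  have -> : (inord (@bd_N v b n inc x ys) == j) = false.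
    apply/negbTE; apply: contra ne => /eqP <-; rewrite inordK // ltnS; exact: hNn.
  by [].
rewrite (@sum_count R _ n (fun y => inc x y) (fun y => \sum_(x' < v) P x' * @bd_Q R v b r eps inc x' y) j).
have ea : \sum_(y | inc x y) \sum_(x' < v) P x' * @bd_Q R v b r eps inc x' y = A + P x * B.
  rewrite exchange_big /=.
  under eq_bigr do rewrite -mulr_sumr (sumQ_in _ _ _ hbd).
  rewrite -eA -eB.
  set al := bd_alpha b r eps.
  transitivity (\sum_(x' < v) (P x' * (al * r%:R + al * (expR eps - 1) * lam%:R) +
      (al * (expR eps - 1) * (r%:R - lam%:R)) * (P x' * (x' == x)%:R))).
    by apply: eq_bigr => x' _; ring.
  rewrite big_split /= -mulr_suml -mulr_sumr sumP_ind hP1 /al /bd_alpha; ring.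
have ec : \sum_(y | ~~ inc x y) \sum_(x' < v) P x' * @bd_Q R v b r eps inc x' y = 1 - (A + P x * B).
  rewrite -ea.
  have <- : \sum_y \sum_(x' < v) P x' * @bd_Q R v b r eps inc x' y = 1.
    rewrite exchange_big /= -hP1; apply: eq_bigr => x' _.
    by rewrite -mulr_sumr (sumQ_all _ he hbd) mulr1.
  by rewrite [X in _ = X - _](bigID (fun y => inc x y)) /=; ring.
by rewrite ea ec.
Qed.

Definition Gf (R : realType) (n : nat) (A B : R) (j : nat) : R := (j%:R / n%:R - A) / B.

Lemma Gf_inj (R : realType) n (A B : R) (j : 'I_n.+1) : (0 < n)%N -> 0 < B ->
  (Gf n A B j == Gf n A B n) = (j == ord_max).
Proof.
move=> hn hB; apply/eqP/eqP => [|-> //].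
have hBi : B^-1 != 0 by rewrite invr_eq0 gt_eqF.
have hNi : (n%:R : R)^-1 != 0 by rewrite invr_eq0 pnatr_eq0 -lt0n.
rewrite /Gf => /(mulIf hBi)/addIr/(mulIf hNi)/eqP; rewrite eqr_nat => /eqP hj.
by apply: val_inj.
Qed.

Lemma Gf_mono (R : realType) n (A B : R) (j : 'I_n.+1) : (0 < n)%N -> 0 < B ->
  Gf n A B j <= Gf n A B n.
Proof.
move=> hn hB; rewrite /Gf ler_pM2r ?invr_gt0 // lerD2r ler_pM2r ?invr_gt0 ?ltr0n //.
by rewrite ler_nat -ltnS.
Qed.

Lemma single (R : realType) n (A B : R) (f : nat -> R) : (0 < n)%N -> 0 < B ->
  \sum_(j < n.+1 | Gf n A B j == Gf n A B n) f j = f n.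
Proof.
move=> hn hB.
rewrite (eq_bigl (fun j : 'I_n.+1 => j == ord_max)); last by move=> j; rewrite Gf_inj.
by rewrite big_pred1_eq.
Qed.

Lemma one_dir (R : realType) n (A1 B1 A2 B2 : R) (f1 f2 : nat -> R) :
  (0 < n)%N -> 0 < B1 -> 0 < B2 -> 0 < f1 n ->
  \sum_(j < n.+1 | Gf n A1 B1 j == Gf n A1 B1 n) f1 j =
  \sum_(j < n.+1 | Gf n A2 B2 j == Gf n A1 B1 n) f2 j ->
  Gf n A1 B1 n <= Gf n A2 B2 n.
Proof.
move=> hn hB1 hB2 hf; rewrite single //.
case: (pickP (fun j : 'I_n.+1 => Gf n A2 B2 j == Gf n A1 B1 n)) => [j /eqP <- _|none].
  exact: Gf_mono.
rewrite big_pred0 // => h; move: hf; rewrite h; by rewrite ltxx.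
Qed.

Unset Implicit Arguments.

Theorem theorem2 (R : realType) (v n : nat) (eps : R)
    (b r k lam : nat) (inc : 'I_v -> 'I_b -> bool)
    (b' r' k' lam' : nat) (inc' : 'I_v -> 'I_b' -> bool) :
  (2 <= v)%N -> (1 <= n)%N -> 0 < eps ->
  @is_block_design v b r k lam inc ->
  @is_block_design v b' r' k' lam' inc' ->
  (marginally_equivalent
     (@bd_Q R v b r eps inc) (@bd_est R v b r lam n eps inc)
     (@bd_Q R v b' r' eps inc') (@bd_est R v b' r' lam' n eps inc')
   <-> k = k').
Proof.
move=> hv hn he hbd hbd'.
split; last first.
  move=> hkk P hP x t.
  by rewrite (law_bd x t hv hn he hbd hP) (law_bd x t hv hn he hbd' hP) hkk.
move=> heq.
have hv0 : (0 < v)%N by apply: leq_trans hv.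
pose x0 : 'I_v := Ordinal hv0.
pose P := fun y : 'I_v => ((y == x0)%:R : R).
have hP : is_prob_vec P.
  split; first by move=> y; rewrite /P ler0n.
  rewrite /P (bigD1 x0) //= ?eqxx big1 ?addr0 // => y /negbTE ->; done.
have hPx : P x0 = 1 by rewrite /P ?eqxx.
have hE : 1 < expR eps by rewrite expR_gt1.
have [/andP[hk0 hkv] _ _ _ _] := hbd.
have [/andP[hk0' hkv'] _ _ _ _] := hbd'.
have hK : 0 < k%:R :> R by rewrite ltr0n.
have hKV : k%:R < v%:R :> R by rewrite ltr_nat.
have hK' : 0 < k'%:R :> R by rewrite ltr0n.
have hKV' : k'%:R < v%:R :> R by rewrite ltr_nat.
have hV : 1 < v%:R :> R by rewrite ltr1n.
have hB1 := Bk_gt0 hE hK hKV hV.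
have hB2 := Bk_gt0 hE hK' hKV' hV.
pose A1 := Ak (expR eps) v%:R k%:R; pose B1 := Bk (expR eps) v%:R k%:R.
pose A2 := Ak (expR eps) v%:R k'%:R; pose B2 := Bk (expR eps) v%:R k'%:R.
rewrite -/B1 in hB1; rewrite -/B2 in hB2.
have L1 := fun t => law_bd x0 t hv hn he hbd hP.
have L2 := fun t => law_bd x0 t hv hn he hbd' hP.
rewrite hPx mul1r in L1; rewrite hPx mul1r in L2.
rewrite -/A1 -/B1 in L1; rewrite -/A2 -/B2 in L2.
set p1 := A1 + B1 in L1; set p2 := A2 + B2 in L2.
have ep1 : p1 = k%:R * expR eps / (k%:R * (expR eps - 1) + v%:R) by rewrite /p1 AB_sum.
have ep2 : p2 = k'%:R * expR eps / (k'%:R * (expR eps - 1) + v%:R) by rewrite /p2 AB_sum.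
have hp1 : 0 < p1 by rewrite ep1; apply: p_gt0.
have hp2 : 0 < p2 by rewrite ep2; apply: p_gt0.
pose f1 := fun j : nat => 'C(n, j)%:R * p1 ^+ j * (1 - p1) ^+ (n - j).
pose f2 := fun j : nat => 'C(n, j)%:R * p2 ^+ j * (1 - p2) ^+ (n - j).
have hf1 : f1 n = p1 ^+ n by rewrite /f1 binn subnn expr0 mulr1 mul1r.
have hf2 : f2 n = p2 ^+ n by rewrite /f2 binn subnn expr0 mulr1 mul1r.
have hf1p : 0 < f1 n by rewrite hf1 exprn_gt0.
have hf2p : 0 < f2 n by rewrite hf2 exprn_gt0.
have le12 : Gf n A1 B1 n <= Gf n A2 B2 n.
  apply: (one_dir (f1 := f1) (f2 := f2)) => //.
  by have := heq P hP x0 (Gf n A1 B1 n); rewrite L1 L2.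
have le21 : Gf n A2 B2 n <= Gf n A1 B1 n.
  apply: (one_dir (f1 := f2) (f2 := f1)) => //.
  by have := heq P hP x0 (Gf n A2 B2 n); rewrite L1 L2.
have eG : Gf n A1 B1 n = Gf n A2 B2 n by apply/eqP; rewrite eq_le le12 le21.
have h := heq P hP x0 (Gf n A1 B1 n); rewrite L1 L2 in h.
have : f1 n = f2 n.
  rewrite -(@single R n A1 B1 f1 hn hB1) -(@single R n A2 B2 f2 hn hB2) -eG; exact: h.
rewrite hf1 hf2; move/eqP; rewrite eqrXn2 ?ltW // => /eqP; rewrite ep1 ep2 => /p_inj.
by move=> /(_ hE hK hK' hV) /eqP; rewrite eqr_nat => /eqP.
Qed.
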